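(* Let $\mathcal{A}=\{H_1,\dots,H_n\}$ be a central arrangement in $\mathbb{Q}^l$ with $H_i=\alpha_i^{-1}(0)$, where the $\alpha_i\in S_\mathbb{Z}=\mathbb{Z}[x_1,\dots,x_l]$ are linear forms such that no prime number divides any $\alpha_i$; regard it as the multiarrangement $(\mathcal{A},\mathbf{1})$ with all multiplicities $1$. Let $Q(\mathcal{A})=\prod_i\alpha_i$ and let $J(\mathcal{A})_\mathbb{Z}$ be the ideal of $S_\mathbb{Z}$ generated by $Q(\mathcal{A})$ and its partial derivatives $\partial Q(\mathcal{A})/\partial x_j$, $j=1,\dots,l$. Let $p$ be a good prime for $\mathcal{A}$. Then $p$ is a zero divisor of $S_\mathbb{Z}/J(\mathcal{A})_\mathbb{Z}$ if and only if $p$ is a zero divisor of $\operatorname{coker}(\varphi_\mathbb{Z})$.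
   Context: $\pi_p$ is reduction mod $p$ on $S_\mathbb{Z}$; $p$ is good if $\pi_p(\alpha_i)\ne\pi_p(\alpha_j)$ for all $i\ne j$. Let $M\subseteq S_\mathbb{Z}^n$ be the submodule generated by $\alpha_ie_i$, $i=1,\dots,n$, $A(\mathcal{A})=(\partial\alpha_i/\partial x_j)_{i,j}$, and $\varphi_\mathbb{Z}\colon S_\mathbb{Z}^l\to S_\mathbb{Z}^n/M$, $(g_1,\dots,g_l)^t\mapsto A(\mathcal{A})(g_1,\dots,g_l)^t$. $p$ is a zero divisor of an $S_\mathbb{Z}$-module $N$ if $pv=0$ for some nonzero $v\in N$. *)

(* Defs.v *)
From HB Require Import structures.
From mathcomp Require Import all_boot all_order all_algebra.
From mathcomp.multinomials Require Import mpoly.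
Set Implicit Arguments. Unset Strict Implicit. Unset Printing Implicit Defensive.
Import GRing.Theory.
Local Open Scope ring_scope.

Definition linear_form (l : nat) (a : {mpoly int[l]}) : Prop :=
  exists c : 'I_l -> int, a = \sum_(j < l) c j *: 'X_j.

Definition hyperplane (l : nat) (a : {mpoly int[l]}) : (('I_l -> rat) -> Prop) :=
  fun v => meval v (map_mpoly (fun z : int => z%:~R : rat) a) = 0.

Definition divides_in_SZ (l : nat) (q : int) (f : {mpoly int[l]}) : Prop :=
  exists g : {mpoly int[l]}, f = q%:MP * g.

Definition red_mod (p l : nat) (f : {mpoly int[l]}) : {mpoly 'F_p[l]} :=
  map_mpoly (fun z : int => z%:~R : 'F_p) f.

Definition good_prime (p l n : nat) (alpha : 'I_n -> {mpoly int[l]}) : Prop :=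
  forall i j : 'I_n, i != j -> red_mod p (alpha i) != red_mod p (alpha j).

Definition defpoly (l n : nat) (alpha : 'I_n -> {mpoly int[l]}) : {mpoly int[l]} :=
  \prod_(i < n) alpha i.

Definition in_J (l n : nat) (alpha : 'I_n -> {mpoly int[l]}) (f : {mpoly int[l]}) : Prop :=
  exists (h : {mpoly int[l]}) (hs : 'I_l -> {mpoly int[l]}),
    f = h * defpoly alpha + \sum_(j < l) hs j * (defpoly alpha)^`M(j).

Definition zero_divisor_quotJ (p l n : nat) (alpha : 'I_n -> {mpoly int[l]}) : Prop :=
  exists f : {mpoly int[l]}, ~ in_J alpha f /\ in_J alpha ((p%:R : {mpoly int[l]}) * f).

(* membership in M + im(A(A)) inside S_Z^n, where M is generated by
   alpha_i e_i and A(A) = (d alpha_i / d x_j)_{i,j} : S_Z^l -> S_Z^n.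
   Then coker(phi_Z) = S_Z^n / (M + im A(A)). *)
Definition in_M_plus_im (l n : nat) (alpha : 'I_n -> {mpoly int[l]})
    (w : 'I_n -> {mpoly int[l]}) : Prop :=
  exists (c : 'I_n -> {mpoly int[l]}) (g : 'I_l -> {mpoly int[l]}),
    forall i : 'I_n,
      w i = c i * alpha i + \sum_(j < l) (alpha i)^`M(j) * g j.

Definition zero_divisor_coker (p l n : nat) (alpha : 'I_n -> {mpoly int[l]}) : Prop :=
  exists w : 'I_n -> {mpoly int[l]},
    ~ in_M_plus_im alpha w /\
    in_M_plus_im alpha (fun i => (p%:R : {mpoly int[l]}) * w i).

(* Main.v *)
Require Import Defs.
From HB Require Import structures.
From mathcomp Require Import all_boot all_order all_algebra.
From mathcomp.multinomials Require Import mpoly.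
From mathcomp Require Import ring.
From Stdlib Require Import FunctionalExtensionality PropExtensionality Classical ClassicalEpsilon.
Set Implicit Arguments. Unset Strict Implicit. Unset Printing Implicit Defensive.
Import GRing.Theory.
Local Open Scope ring_scope.

Definition mdvd (R : comRingType) (l : nat) (a f : {mpoly R[l]}) : Prop :=
  exists h, f = a * h.

Lemma mdvdD (R : comRingType) l (a f g : {mpoly R[l]}) :
  mdvd a f -> mdvd a g -> mdvd a (f + g).
Proof. by move=> [h1 ->] [h2 ->]; exists (h1 + h2); rewrite mulrDr. Qed.

Lemma mdvdMr (R : comRingType) l (a f g : {mpoly R[l]}) :
  mdvd a f -> mdvd a (f * g).
Proof. by move=> [h1 ->]; exists (h1 * g); rewrite mulrA. Qed.

Lemma mdvdMl (R : comRingType) l (a f g : {mpoly R[l]}) :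
  mdvd a g -> mdvd a (f * g).
Proof. by move=> [h1 ->]; exists (f * h1); rewrite mulrCA. Qed.

Lemma mdvdN (R : comRingType) l (a f : {mpoly R[l]}) :
  mdvd a f -> mdvd a (- f).
Proof. by move=> [h1 ->]; exists (- h1); rewrite mulrN. Qed.

Lemma mdvd0 (R : comRingType) l (a : {mpoly R[l]}) : mdvd a 0.
Proof. by exists 0; rewrite mulr0. Qed.

Lemma mdvd_sum (R : comRingType) l (a : {mpoly R[l]}) (I : Type) (r : seq I) (P : pred I) F :
  (forall i, P i -> mdvd a (F i)) -> mdvd a (\sum_(i <- r | P i) F i).
Proof.
move=> H; elim/big_rec: _ => [|i x Pi Hx]; first exact: mdvd0.
exact: mdvdD (H _ Pi) Hx.
Qed.
Section FieldPrime.
Variable (K : fieldType) (l : nat) (c : 'I_l -> K) (j0 : 'I_l).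
Hypothesis cj0 : c j0 != 0.
Definition la : {mpoly K[l]} := \sum_j c j *: 'X_j.
Definition lt : l.-tuple {mpoly K[l]} :=
  [tuple (if i == j0 then 'X_i - (c j0)^-1 *: la else 'X_i) | i < l].
Definition lphi (f : {mpoly K[l]}) := f \mPo lt.

Lemma phi_a : lphi la = 0.
Proof.
rewrite {1}/lphi {1}/la raddf_sum /=.
under eq_bigr => j _ do rewrite comp_mpolyZ comp_mpolyXU -tnth_nth tnth_mktuple.
rewrite (bigD1 j0) //= eqxx scalerBr scalerA mulfV // scale1r.
under eq_bigr => j hj do rewrite (negPf hj).
rewrite /la (bigD1 j0) //=.
by rewrite opprD addrA subrr sub0r addNr.
Qed.

Lemma D_all (f : {mpoly K[l]}) : mdvd la (f - lphi f).
Proof.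
have DD : forall f g, mdvd la (f - lphi f) -> mdvd la (g - lphi g) -> mdvd la (f + g - lphi (f + g)).
  move=> f1 g1 H1 H2; rewrite /lphi raddfD /= opprD addrACA; exact: mdvdD.
have DM : forall f g, mdvd la (f - lphi f) -> mdvd la (g - lphi g) -> mdvd la (f * g - lphi (f * g)).
  move=> f1 g1 H1 H2; have -> : lphi (f1 * g1) = lphi f1 * lphi g1 by rewrite /lphi rmorphM.
  have -> : f1 * g1 - lphi f1 * lphi g1 = (f1 - lphi f1) * g1 + lphi f1 * (g1 - lphi g1).
    by rewrite mulrBl mulrBr addrA subrK.
  by apply: mdvdD; [apply: mdvdMr | apply: mdvdMl].
have DC : forall x, mdvd la (x%:MP - lphi x%:MP).
  by move=> x; rewrite /lphi comp_mpolyC subrr; apply: mdvd0.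
have DX : forall i, mdvd la ('X_i - lphi 'X_i).
  move=> i; rewrite /lphi comp_mpolyXU -tnth_nth tnth_mktuple.
  case: eqP => _; last by rewrite subrr; apply: mdvd0.
  by exists ((c j0)^-1)%:MP; rewrite opprB addrC subrK mulrC mul_mpolyC.
have DXm : forall m, mdvd la ('X_[m] - lphi 'X_[m]).
  move=> m; rewrite mpolyXE_id.
  apply: (big_ind (fun x => mdvd la (x - lphi x))).
  - by have := DC 1; rewrite mpolyC1.
  - exact: DM.
  move=> i _; elim: (m i) => [|k IH]; first by have := DC 1; rewrite mpolyC1 expr0.
  by rewrite exprS; apply: DM.
elim/mpolyind: f => [|x m p _ _ IH]; first by rewrite /lphi raddf0 subr0; apply: mdvd0.
apply: DD => //; rewrite -mul_mpolyC; exact: DM.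
Qed.

Lemma lin_prime (f g : {mpoly K[l]}) : mdvd la (f * g) -> mdvd la f \/ mdvd la g.
Proof.
move=> [h Hh].
have : lphi f * lphi g = 0 by rewrite /lphi -rmorphM /= Hh rmorphM /= -/(lphi la) phi_a mul0r.
move/eqP; rewrite mulf_eq0 => /orP [] /eqP H.
  by left; have := D_all f; rewrite H subr0.
by right; have := D_all g; rewrite H subr0.
Qed.
End FieldPrime.
Section Lin.
Variable (R : ringType) (l : nat).

Lemma lin_coefU (c : 'I_l -> R) k : (\sum_j c j *: ('X_j : {mpoly R[l]}))@_U_(k) = c k.
Proof.
rewrite raddf_sum /= (bigD1 k) //= mcoeffZ mcoeffXU eqxx mulr1 big1 ?addr0 //.
by move=> j /negPf hj; rewrite mcoeffZ mcoeffXU hj mulr0.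
Qed.

Lemma lin_coef0 (c : 'I_l -> R) : (\sum_j c j *: ('X_j : {mpoly R[l]}))@_0 = 0.
Proof.
rewrite raddf_sum /= big1 // => j _; rewrite mcoeffZ mcoeffX.
suff /negPf -> : (U_(j) != 0 :> 'X_{1..l})%MM by rewrite mulr0.
by rewrite -mdeg_eq0 mdeg1.
Qed.

Lemma lin_msize (c : 'I_l -> R) : (msize (\sum_j c j *: ('X_j : {mpoly R[l]})) <= 2)%N.
Proof.
apply: (leq_trans (msize_sum _ _ _)); apply/bigmax_leqP => j _.
by apply: (leq_trans (msizeZ_le _ _)); rewrite msizeX mdeg1.
Qed.

Lemma lin_msize_eq (c : 'I_l -> R) : \sum_j c j *: ('X_j : {mpoly R[l]}) != 0 ->
   msize (\sum_j c j *: ('X_j : {mpoly R[l]})) = 2.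
Proof.
move=> nz; apply/eqP; rewrite eqn_leq lin_msize /=; rewrite ltnNge; apply/negP => H.
move/eqP: nz; apply; rewrite (msize1_polyC H) lin_coef0 //.
Qed.
End Lin.

Lemma lin_form_eq (l : nat) (a : {mpoly int[l]}) : linear_form a ->
  a = \sum_j a@_U_(j) *: 'X_j.
Proof. by move=> [c ->]; apply: eq_bigr => j _; rewrite lin_coefU. Qed.

Lemma lin_quot_const (R : idomainType) l (c d : 'I_l -> R) (h : {mpoly R[l]}) :
  \sum_j c j *: ('X_j : {mpoly R[l]}) != 0 ->
  \sum_j d j *: ('X_j : {mpoly R[l]}) = (\sum_j c j *: 'X_j) * h ->
  h = (h@_0)%:MP.
Proof.
move=> nz E; have [->|hnz] := eqVneq h 0; first by rewrite mcoeff0.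
apply: msize1_polyC.
have Eb : \sum_j d j *: ('X_j : {mpoly R[l]}) != 0 by rewrite E mulf_neq0.
have := lin_msize_eq Eb; rewrite E msizeM // lin_msize_eq //.
by case: (msize h) => [|[|k]].
Qed.
Section Red.
Variable (p : nat) (pp : prime p).

Lemma Fp_natr_eq0 (n : nat) : ((n%:R : 'F_p) == 0) = (p %| n)%N.
Proof.
apply/eqP/idP => [H|H].
  by have := val_Fp_nat pp n; rewrite H /= => /esym /eqP.
by apply: val_inj; rewrite /= val_Fp_nat //; move/eqP: H.
Qed.

Lemma Fp_intr_eq0 (z : int) : ((z%:~R : 'F_p) == 0) = (p%:Z %| z)%Z.
Proof.
rewrite dvdzE /=; case: z => n /=.
  by rewrite -pmulrn Fp_natr_eq0.
by rewrite NegzE mulrNz oppr_eq0 -pmulrn Fp_natr_eq0.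
Qed.

Lemma Fp_val_natr (x : 'F_p) : ((val x)%:R : 'F_p) = x.
Proof.
apply: val_inj; rewrite /= val_Fp_nat // modn_small //.
by apply: leq_trans (ltn_ord x) _; rewrite Fp_cast.
Qed.

Lemma red_coef l (f : {mpoly int[l]}) m : (red_mod p f)@_m = (f@_m)%:~R.
Proof. by rewrite /red_mod mcoeff_map_mpoly. Qed.

Lemma red_eq0_div l (f : {mpoly int[l]}) : red_mod p f = 0 ->
  exists g, f = (p%:Z)%:MP * g.
Proof.
move=> H; exists (\sum_(m <- msupp f) ((f@_m %/ p%:Z)%Z *: 'X_[m])).
rewrite mul_mpolyC scaler_sumr {1}[f]mpolyE; apply: eq_bigr => m _.
rewrite scalerA mulrC divzK //.
by rewrite -Fp_intr_eq0 -red_coef H mcoeff0.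
Qed.

Lemma red_lift l (g : {mpoly 'F_p[l]}) : exists f, red_mod p f = g.
Proof.
elim/mpolyind: g => [|c m g _ _ [f Hf]]; first by exists 0; rewrite /red_mod raddf0.
exists ((val c)%:Z *: 'X_[m] + f).
by rewrite /red_mod raddfD /= map_mpolyZ map_mpolyX -/(red_mod p f) Hf /= -pmulrn Fp_val_natr.
Qed.

Lemma red_p l : red_mod p ((p%:Z)%:MP : {mpoly int[l]}) = 0.
Proof. by rewrite /red_mod map_mpolyC /= -pmulrn pchar_Fp_0 // mpolyC0. Qed.
End Red.
Definition toQ l (f : {mpoly int[l]}) : {mpoly rat[l]} := map_mpoly (intr : int -> rat) f.

Lemma toQZ l c (f : {mpoly int[l]}) : toQ (c *: f) = c%:~R *: toQ f.
Proof. by rewrite /toQ map_mpolyZ. Qed.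
Lemma toQD l (f g : {mpoly int[l]}) : toQ (f + g) = toQ f + toQ g.
Proof. by rewrite /toQ raddfD. Qed.
Lemma toQM l (f g : {mpoly int[l]}) : toQ (f * g) = toQ f * toQ g.
Proof. by rewrite /toQ rmorphM. Qed.
Lemma toQ0 l : toQ (0 : {mpoly int[l]}) = 0.
Proof. by rewrite /toQ raddf0. Qed.
Lemma toQX l (m : 'X_{1..l}) : toQ 'X_[m] = 'X_[m].
Proof. by rewrite /toQ map_mpolyX. Qed.

Lemma toQ_inj l : injective (@toQ l).
Proof.
move=> f g H; apply/mpolyP => m.
have := congr1 (mcoeff m) H; rewrite /toQ !mcoeff_map_mpoly; exact: intr_inj.
Qed.

Lemma clear_den l (v : {mpoly rat[l]}) :
  exists c : int, c != 0 /\ exists h : {mpoly int[l]}, c%:~R *: v = toQ h.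
Proof.
elim/mpolyind: v => [|x m v _ _ [c [cnz [h Hh]]]].
  by exists 1; split => //; exists 0; rewrite scaler0 /toQ raddf0.
exists (c * denq x); split; first by rewrite mulf_neq0 // denq_neq0.
exists ((c * numq x) *: 'X_[m] + denq x *: h).
rewrite /toQ [RHS]raddfD /= !map_mpolyZ map_mpolyX -/(toQ h) -Hh scalerDr !scalerA.
congr (_ + _); last by rewrite rmorphM /= mulrC.
congr (_ *: _); rewrite !rmorphM /= numqE; ring.
Qed.

Section ZPrime.
Variable (l : nat) (a : {mpoly int[l]}).
Hypothesis (alin : linear_form a) (anz : a != 0)
  (aprim : forall q : nat, prime q -> ~ divides_in_SZ q%:Z a).

Lemma red_a_neq0 q : prime q -> red_mod q a != 0.
Proof.
move=> qp; apply/eqP => H; have [g Hg] := red_eq0_div qp H.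
by apply: (aprim qp); exists g.
Qed.

Lemma cancel_const (n : nat) : forall (c : int) (f h : {mpoly int[l]}),
  (`|c| <= n)%N -> c != 0 -> c *: f = a * h -> mdvd a f.
Proof.
elim: n => [|n IH] c f h.
  by rewrite leqn0 absz_eq0 => /eqP -> /eqP.
move=> cle cnz E.
have [c1|c1] := leqP `|c|%N 1.
  move: c1 cle cnz E; case: c => [[|[|k]]|[|k]] //= _ _ _ E.
    by exists h; rewrite -E scale1r.
  exists (- h); rewrite mulrN -E NegzE scaleN1r opprK //.
set q := pdiv `|c|.
have qp : prime q by apply: pdiv_prime.
have qd : (q %| `|c|)%N by apply: pdiv_dvd.
have qc : (q%:Z %| c)%Z by rewrite dvdzE.
have Hr : red_mod q a * red_mod q h = 0.
  rewrite /red_mod -rmorphM /= -E map_mpolyZ /=.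
  by move: qc; rewrite -(Fp_intr_eq0 qp) => /eqP ->; rewrite scale0r.
have Hh : red_mod q h = 0.
  move/eqP: Hr; rewrite mulf_eq0 => /orP [H|/eqP //].
  by case/negP: (red_a_neq0 qp).
have [h' Hh'] := red_eq0_div qp Hh.
set c' := (c %/ q%:Z)%Z.
have Ec : c = c' * q%:Z by rewrite divzK.
have c'nz : c' != 0 by move: cnz; rewrite Ec mulf_eq0 negb_or => /andP [].
apply: (IH c' f h').
- have qgt1 : (1 < q)%N by apply: prime_gt1.
  move: cle; rewrite Ec abszM /=.
  move=> H; rewrite -ltnS; apply: leq_trans H; apply: ltn_Pmulr => //.
  by rewrite absz_gt0.
- exact: c'nz.
- apply/eqP; rewrite -subr_eq0; apply/eqP.
  have : (q%:Z)%:MP * (c' *: f - a * h') = 0.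
    rewrite mulrBr mulrCA -Hh' -E Ec mul_mpolyC scalerA mulrC //.
    by rewrite subrr.
  move/eqP; rewrite mulf_eq0 mpolyC_eq0 /= => /orP [|/eqP //].
  by move/eqP => [] qz; move: (prime_gt0 qp); rewrite qz.
Qed.

Lemma toQ_a : toQ a = \sum_j ((a@_U_(j))%:~R : rat) *: 'X_j.
Proof.
rewrite {1}(lin_form_eq alin) (big_morph (@toQ l) (@toQD l) (@toQ0 l)).
by apply: eq_bigr => j _; rewrite toQZ toQX.
Qed.

Lemma a_coef_nz : exists j0, a@_U_(j0) != 0.
Proof.
case: (pickP (fun j => a@_U_(j) != 0)) => [j Hj|H]; first by exists j.
move/negP: anz; case; rewrite (lin_form_eq alin) big1 // => j _.
by move: (H j) => /= /negbFE /eqP ->; rewrite scale0r.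
Qed.

Lemma toQ_dvd (f : {mpoly int[l]}) : mdvd (toQ a) (toQ f) -> mdvd a f.
Proof.
move=> [hq Hq]; have [c [cnz [h' Hh']]] := clear_den hq.
apply: (@cancel_const `|c|%N c f h') => //.
apply: toQ_inj; rewrite toQZ toQM Hq -Hh'.
by rewrite scalerAr.
Qed.

Lemma Z_lin_prime (f g : {mpoly int[l]}) : mdvd a (f * g) -> mdvd a f \/ mdvd a g.
Proof.
move=> [h E]; have [j0 cj0] := a_coef_nz.
have cj0' : ((a@_U_(j0))%:~R : rat) != 0 by rewrite intr_eq0.
have := @lin_prime _ l (fun j => (a@_U_(j))%:~R) j0 cj0' (toQ f) (toQ g).
rewrite /la -toQ_a => H.
have [] : mdvd (toQ a) (toQ f) \/ mdvd (toQ a) (toQ g).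
  by apply: H; exists (toQ h); rewrite -!toQM E.
- by move/toQ_dvd; left.
- by move/toQ_dvd; right.
Qed.
End ZPrime.

Lemma prime_prod (R : comRingType) l (a : {mpoly R[l]}) :
  (forall f g, mdvd a (f * g) -> mdvd a f \/ mdvd a g) -> ~ mdvd a 1 ->
  forall (I : Type) (r : seq I) (P : pred I) (F : I -> {mpoly R[l]}),
  mdvd a (\prod_(i <- r | P i) F i) -> exists i, P i /\ mdvd a (F i).
Proof.
move=> Hp H1 I r P F; elim/big_rec: _ => [//|i x Pi IH /Hp [H|H]].
  by exists i.
exact: IH.
Qed.

Lemma lin_not_unit (R : comRingType) l (c : 'I_l -> R) :
  ~ mdvd (\sum_j c j *: ('X_j : {mpoly R[l]})) 1.
Proof.
move=> [h Hh]; have := congr1 (mcoeff 0%MM) Hh.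
rewrite mcoeff1 eqxx (mcoeff0_is_multiplicative _ _).1 lin_coef0 mul0r.
by move/eqP; rewrite oner_eq0.
Qed.

Lemma mderiv_prod_seq (R : comRingType) l (I : eqType) (r : seq I) (F : I -> {mpoly R[l]}) j :
  uniq r -> (\prod_(i <- r) F i)^`M(j) =
     \sum_(i <- r) (F i)^`M(j) * \prod_(k <- r | k != i) F k.
Proof.
elim: r => [|x r IH] /=.
  by rewrite !big_nil -mpolyC1 mderivC.
move=> /andP [xr ur]; rewrite big_cons mderivM IH // big_cons.
rewrite [\prod_(k <- x :: r | k != x) _]big_cons eqxx /=.
rewrite [\prod_(k <- r | k != x) _]big_rmcond_in; last first.
  by move=> i ir; rewrite negbK => /eqP ei; move: xr; rewrite -ei ir.
congr (_ + _); rewrite mulr_sumr [LHS]big_seq [RHS]big_seq; apply: eq_bigr => i ir.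
rewrite big_cons; have -> : (x != i) by apply/eqP => ei; move: xr; rewrite ei ir.
by rewrite mulrCA.
Qed.

Lemma mderiv_prod (R : comRingType) l n (F : 'I_n -> {mpoly R[l]}) j :
  (\prod_(i < n) F i)^`M(j) = \sum_(i < n) (F i)^`M(j) * \prod_(k < n | k != i) F k.
Proof. by rewrite mderiv_prod_seq // index_enum_uniq. Qed.

Section Main.
Variables (l n : nat) (alpha : 'I_n -> {mpoly int[l]}) (p : nat).
Hypotheses (Hlin : forall i, linear_form (alpha i)) (Hnz : forall i, alpha i != 0)
 (Hhyp : forall i j, i != j -> hyperplane (alpha i) <> hyperplane (alpha j))
 (Hprim : forall (q : nat) i, prime q -> ~ divides_in_SZ q%:Z (alpha i)) (pp : prime p).

Definition co i j := (alpha i)@_U_(j).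
Definition Qi i := \prod_(k < n | k != i) alpha k.
Definition psi (w : 'I_n -> {mpoly int[l]}) := \sum_i w i * Qi i.
Local Notation N := (in_M_plus_im alpha).
Local Notation Q := (defpoly alpha).

Lemma alpha_eq i : alpha i = \sum_j co i j *: 'X_j.
Proof. exact: lin_form_eq. Qed.

Lemma deriv_alpha i j : (alpha i)^`M(j) = (co i j)%:MP.
Proof.
rewrite {1}alpha_eq raddf_sum /= (bigD1 j) //= big1 ?addr0.
  have E0 : (U_(j) - U_(j))%MM = 0%MM by rewrite -[X in (X - _)%MM]add0m addmK.
  rewrite mderivZ mderivX mnm1E eqxx /= E0 mpolyX0 scale1r alg_mpolyC //.
by move=> k /negPf hk; rewrite mderivZ mderivX mnm1E hk /= scale0r scaler0.
Qed.

Lemma Q_deriv j : Q^`M(j) = \sum_i (co i j)%:MP * Qi i.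
Proof. by rewrite /defpoly mderiv_prod; apply: eq_bigr => i _; rewrite deriv_alpha. Qed.

Lemma Q_split i : Q = alpha i * Qi i.
Proof. by rewrite /defpoly (bigD1 i). Qed.

Lemma Qi_dvd i k : k != i -> mdvd (alpha i) (Qi k).
Proof. by move=> ki; rewrite /Qi (bigD1 i) 1?eq_sym //=; apply: mdvdMr; exists 1; rewrite mulr1. Qed.

Lemma N_add w v : N w -> N v -> N (fun i => w i + v i).
Proof.
move=> [c1 [g1 H1]] [c2 [g2 H2]]; exists (fun i => c1 i + c2 i), (fun j => g1 j + g2 j) => i.
rewrite H1 H2 mulrDl; under [in RHS]eq_bigr => j _ do rewrite mulrDr.
by rewrite big_split /=; ring.
Qed.

Lemma N_M (c : 'I_n -> {mpoly int[l]}) : N (fun i => c i * alpha i).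
Proof. by exists c, (fun _ => 0) => i; rewrite big1 ?addr0 // => j _; rewrite mulr0. Qed.

Lemma psiN w : N w -> in_J alpha (psi w).
Proof.
move=> [c [g H]]; exists (\sum_i c i), g.
rewrite /psi; under eq_bigr => i _ do rewrite H mulrDl big_distrl /=.
rewrite big_split /= mulr_suml; congr (_ + _).
  by apply: eq_bigr => i _; rewrite (Q_split i) mulrA.
rewrite exchange_big /=; apply: eq_bigr => j _; rewrite Q_deriv mulr_sumr.
by apply: eq_bigr => i _; rewrite deriv_alpha; ring.
Qed.

Lemma Jpsi (i0 : 'I_n) f : in_J alpha f -> exists v, N v /\ psi v = f.
Proof.
move=> [h [hs ->]].
exists (fun i => (if i == i0 then h else 0) * alpha i + \sum_j (alpha i)^`M(j) * hs j).
split; first by exists (fun i => if i == i0 then h else 0), hs.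
rewrite /psi; under eq_bigr => i _ do rewrite mulrDl big_distrl /=.
rewrite big_split /=; congr (_ + _).
  rewrite (bigD1 i0) //= eqxx big1 ?addr0; first by rewrite -mulrA -Q_split.
  by move=> i /negPf ->; rewrite !mul0r.
rewrite exchange_big /=; apply: eq_bigr => j _; rewrite Q_deriv mulr_sumr.
by apply: eq_bigr => i _; rewrite deriv_alpha; ring.
Qed.


Lemma toQC (c : int) : toQ (c%:MP : {mpoly int[l]}) = (c%:~R)%:MP.
Proof. by rewrite /toQ map_mpolyC. Qed.

Lemma hyp_scale (a b : {mpoly int[l]}) (t : int) : t != 0 -> b = t%:MP * a ->
  hyperplane b = hyperplane a.
Proof.
move=> tnz ->; apply: functional_extensionality => v.
apply: propositional_extensionality.
rewrite /hyperplane -/(toQ _) -/(toQ a) toQM toQC mevalM mevalC.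
split => [/eqP|->]; last by rewrite mulr0.
by rewrite mulf_eq0 intr_eq0 (negPf tnz) /= => /eqP.
Qed.

Lemma alpha_coprime i k : k != i -> ~ mdvd (alpha i) (alpha k).
Proof.
move=> ki [h Hh].
have hc := @lin_quot_const _ l (co i) (co k) h.
rewrite -!alpha_eq in hc; have {}hc := hc (Hnz i) Hh.
have tnz : h@_0 != 0.
  by apply/eqP => h0; move: (Hnz k); rewrite Hh hc h0 mulr0 eqxx.
apply: (Hhyp ki); apply: (hyp_scale tnz); by rewrite Hh mulrC -hc.
Qed.

Lemma alpha_prime i f g : mdvd (alpha i) (f * g) -> mdvd (alpha i) f \/ mdvd (alpha i) g.
Proof. exact: (@Z_lin_prime l (alpha i) (Hlin i) (Hnz i) (fun q qp => @Hprim q i qp)). Qed.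

Lemma alpha_not_unit i : ~ mdvd (alpha i) 1.
Proof. by rewrite alpha_eq; apply: lin_not_unit. Qed.

Lemma alpha_Qi i : ~ mdvd (alpha i) (Qi i).
Proof.
move=> /(prime_prod (@alpha_prime i) (@alpha_not_unit i)) [k [ki H]].
exact: (alpha_coprime ki H).
Qed.

Lemma kerK w : psi w = 0 -> N w.
Proof.
move=> H0.
have : forall i, exists c, w i = c * alpha i.
  move=> i.
  have : mdvd (alpha i) (w i * Qi i).
    have -> : w i * Qi i = - \sum_(k | k != i) w k * Qi k.
      have E : w i * Qi i + \sum_(k | k != i) w k * Qi k = 0.
        by move: H0; rewrite /psi (bigD1 i).
      by move/eqP: E; rewrite addr_eq0 => /eqP.
    by apply: mdvdN; apply: mdvd_sum => k ki; apply: mdvdMl; apply: Qi_dvd.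
  case/alpha_prime => [[c Hc]|/alpha_Qi //].
  by exists c; rewrite Hc mulrC.
case/fin_all_exists => c Hc.
have -> : w = (fun i => c i * alpha i) by apply: functional_extensionality.
exact: N_M.
Qed.


Lemma N_n0 w : n = 0%N -> N w.
Proof.
move=> n0; exists (fun _ => 0), (fun _ => 0) => i.
by move: (ltn_ord i); rewrite {2}n0.
Qed.

Lemma psi_scale (x : {mpoly int[l]}) w : psi (fun i => x * w i) = x * psi w.
Proof. by rewrite /psi mulr_sumr; apply: eq_bigr => i _; rewrite mulrA. Qed.

Lemma psiB w v : psi (fun i => w i - v i) = psi w - psi v.
Proof. by rewrite /psi -sumrB; apply: eq_bigr => i _; rewrite mulrBl. Qed.

Lemma dir1 : zero_divisor_coker p alpha -> zero_divisor_quotJ p alpha.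
Proof.
move=> [w [nw pw]].
have [n0|ngt0] := posnP n; first by case: nw; apply: N_n0.
pose i0 := Ordinal ngt0.
exists (psi w); split; last by rewrite -psi_scale; apply: psiN.
move=> /(Jpsi i0) [v [Nv Ev]]; apply: nw.
have Hd : N (fun i => w i - v i) by apply: kerK; rewrite psiB Ev subrr.
have := N_add Hd Nv.
suff -> : (fun i => w i - v i + v i) = w by [].
by apply: functional_extensionality => i; rewrite subrK.
Qed.


Definition red := red_mod p (l := l).
Lemma redM f g : red (f * g) = red f * red g. Proof. by rewrite /red /red_mod rmorphM. Qed.
Lemma redD f g : red (f + g) = red f + red g. Proof. by rewrite /red /red_mod raddfD. Qed.
Lemma redB f g : red (f - g) = red f - red g. Proof. by rewrite /red /red_mod raddfB. Qed.
Lemma redN f : red (- f) = - red f. Proof. by rewrite /red /red_mod raddfN. Qed.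
Lemma red0 : red 0 = 0. Proof. by rewrite /red /red_mod raddf0. Qed.
Lemma redZ c f : red (c *: f) = c%:~R *: red f. Proof. by rewrite /red /red_mod map_mpolyZ. Qed.
Lemma redC c : red c%:MP = (c%:~R)%:MP. Proof. by rewrite /red /red_mod map_mpolyC. Qed.
Lemma redX m : red 'X_[m] = 'X_[m]. Proof. by rewrite /red /red_mod map_mpolyX. Qed.
Lemma red_sum (I : Type) (r : seq I) (P : pred I) F : red (\sum_(i <- r | P i) F i) = \sum_(i <- r | P i) red (F i).
Proof. exact: (big_morph red redD red0). Qed.
Lemma red_prod (I : Type) (r : seq I) (P : pred I) F : red (\prod_(i <- r | P i) F i) = \prod_(i <- r | P i) red (F i).
Proof. by rewrite /red /red_mod rmorph_prod. Qed.
Lemma red_pnat : red (p%:R) = 0.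
Proof. by rewrite /red /red_mod rmorph_nat -mpolyC_nat pchar_Fp_0 // mpolyC0. Qed.
Lemma pnat_C : (p%:R : {mpoly int[l]}) = (p%:Z)%:MP.
Proof. by rewrite -mpolyC_nat natz. Qed.

Definition ra i := red (alpha i).
Lemma ra_eq i : ra i = \sum_j ((co i j)%:~R : 'F_p) *: 'X_j.
Proof. by rewrite /ra {1}alpha_eq red_sum; apply: eq_bigr => j _; rewrite redZ redX. Qed.

Lemma ra_neq0 i : ra i != 0.
Proof. exact: (red_a_neq0 (fun q qp => @Hprim q i qp) pp). Qed.

Lemma ra_coef_nz i : exists j0, ((co i j0)%:~R : 'F_p) != 0.
Proof.
case: (pickP (fun j => ((co i j)%:~R : 'F_p) != 0)) => [j Hj|H]; first by exists j.
move/negP: (ra_neq0 i); case; rewrite ra_eq big1 // => j _.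
by move: (H j) => /= /negbFE /eqP ->; rewrite scale0r.
Qed.

Lemma ra_prime i f g : mdvd (ra i) (f * g) -> mdvd (ra i) f \/ mdvd (ra i) g.
Proof.
have [j0 Hj0] := ra_coef_nz i.
have := @lin_prime _ l (fun j => (co i j)%:~R) j0 Hj0 f g.
by rewrite /la -ra_eq.
Qed.

Lemma ra_not_unit i : ~ mdvd (ra i) 1.
Proof. by rewrite ra_eq; apply: lin_not_unit. Qed.

Definition cong e a m := exists d : int, forall j, ((p%:Z) ^+ e %| co m j - d * co a j)%Z.

Lemma ra_dvd_cong a m : mdvd (ra a) (ra m) -> cong 1 a m.
Proof.
move=> [h Hh].
have hc := @lin_quot_const _ l (fun j => (co a j)%:~R : 'F_p) (fun j => (co m j)%:~R) h.
rewrite -!ra_eq in hc; have {}hc := hc (ra_neq0 a) Hh.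
exists (val (h@_0))%:Z => j; rewrite expr1 -Fp_intr_eq0 // rmorphB rmorphM /=.
have := congr1 (mcoeff U_(j)) Hh; rewrite hc mulrC mul_mpolyC mcoeffZ !ra_eq !lin_coefU => ->.
by rewrite mcoeffC eqxx mulr1 -pmulrn Fp_val_natr // subrr.
Qed.


Lemma red_Qi k : red (Qi k) = \prod_(k' < n | k' != k) ra k'.
Proof. by rewrite /Qi red_prod. Qed.

Lemma inJ_n0 f : n = 0%N -> in_J alpha f.
Proof.
move=> n0; exists f, (fun _ => 0); rewrite big1 ?addr0; last by move=> j _; rewrite mul0r.
rewrite /defpoly big_pred0 ?mulr1 // => i.
by move: (ltn_ord i); rewrite {2}n0.
Qed.

Lemma dir2_strong : (forall a m, a != m -> ~ cong 1 a m) ->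
  zero_divisor_quotJ p alpha -> zero_divisor_coker p alpha.
Proof.
move=> Hs [f [nf pf]].
have [n0|ngt0] := posnP n; first by case: nf; apply: inJ_n0.
pose i0 := Ordinal ngt0.
have [v [[c [g Hv]] Ev]] := Jpsi i0 pf.
have Rpsi : \sum_i red (v i) * red (Qi i) = 0.
  under eq_bigr => i _ do rewrite -redM.
  by rewrite -red_sum -/(psi v) Ev redM red_pnat mul0r.
have Hd : forall i, exists db, red (v i) = ra i * db.
  move=> i.
  have : mdvd (ra i) (red (v i) * red (Qi i)).
    have -> : red (v i) * red (Qi i) = - \sum_(k | k != i) red (v k) * red (Qi k).
      have E : red (v i) * red (Qi i) + \sum_(k | k != i) red (v k) * red (Qi k) = 0.
        by move: Rpsi; rewrite (bigD1 i).
      by move/eqP: E; rewrite addr_eq0 => /eqP.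
    apply: mdvdN; apply: mdvd_sum => k ki; apply: mdvdMl; rewrite red_Qi (bigD1 i) 1?eq_sym //=.
    by apply: mdvdMr; exists 1; rewrite mulr1.
  case/ra_prime => [//|].
  rewrite red_Qi => /(prime_prod (@ra_prime i) (@ra_not_unit i)) [k [ki H]].
  by case: (Hs i k); [rewrite eq_sym | apply: ra_dvd_cong].
have [db Hdb] := fin_all_exists Hd.
have [d Hdd0] := fin_all_exists (fun i => red_lift pp (db i)).
have Hdd : forall i, red (d i) = db i := Hdd0.
have Hu : forall i, exists u, v i - d i * alpha i = (p%:Z)%:MP * u.
  by move=> i; apply: red_eq0_div => //; rewrite -/red redB redM Hdd Hdb mulrC subrr.
have [u Hu'] := fin_all_exists Hu.
have Hs0 : exists s, \sum_i d i = (p%:Z)%:MP * s.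
  apply: red_eq0_div => //; rewrite -/red red_sum.
  have : (\sum_i db i) * red Q = 0.
    apply: (etrans _ Rpsi); rewrite mulr_suml; apply: eq_bigr => i _.
    by rewrite Hdb (Q_split i) redM -/(ra i) mulrA [db i * _]mulrC.
  move/eqP; rewrite mulf_eq0 => /orP [/eqP H0|].
    by apply: (etrans _ H0); apply: eq_bigr => i _; rewrite Hdd.
  rewrite /defpoly red_prod prodf_seq_eq0 => /hasP [i _ /= Hi].
  by move: (ra_neq0 i); rewrite /ra Hi.
have [s Hs1] := Hs0.
have Pnz : ((p%:Z)%:MP : {mpoly int[l]}) != 0 by rewrite mpolyC_eq0 -lt0n prime_gt0.
have Ef : f = s * Q + psi u.
  apply: (mulfI Pnz); rewrite -pnat_C -Ev pnat_C /psi.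
  transitivity (\sum_i (d i * alpha i + (p%:Z)%:MP * u i) * Qi i).
    by apply: eq_bigr => i _; rewrite -Hu' addrC subrK.
  under eq_bigr => i _ do rewrite mulrDl -[d i * alpha i * _]mulrA -(Q_split i) -mulrA.
  by rewrite big_split /= -mulr_suml -mulr_sumr Hs1 mulrDr mulrA.
pose w := fun i => u i + (if i == i0 then s * alpha i else 0).
have Epw : psi w = f.
  rewrite Ef /psi; under eq_bigr => i _ do rewrite /w mulrDl.
  rewrite big_split /= addrC; congr (_ + _).
  rewrite (bigD1 i0) //= big1 ?addr0; first by rewrite -mulrA -Q_split.
  by move=> i /negPf ->; rewrite mul0r.
exists w; split.
  by move/psiN; rewrite Epw.
exists (fun i => c i - d i + (if i == i0 then (p%:Z)%:MP * s else 0)), g => i.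
rewrite pnat_C /w mulrDr -Hu' Hv; case: (i == i0); ring.
Qed.


Lemma hyp_scale2 (a b : {mpoly int[l]}) (t1 t2 : int) : t1 != 0 -> t2 != 0 ->
  t1 *: b = t2 *: a -> hyperplane b = hyperplane a.
Proof.
move=> t1nz t2nz E; apply: functional_extensionality => v.
apply: propositional_extensionality.
have := congr1 (fun x => meval v (toQ x)) E; rewrite /= !toQZ !mevalZ => E'.
rewrite /hyperplane -/(toQ _) -/(toQ a).
split => H.
  by move/eqP: E'; rewrite H mulr0 eq_sym mulf_eq0 intr_eq0 (negPf t2nz) => /eqP.
by move/eqP: E'; rewrite H mulr0 mulf_eq0 intr_eq0 (negPf t1nz) => /eqP.
Qed.

Definition minor a m j j' := co m j * co a j' - co m j' * co a j.

Lemma minor_nz a m : m != a -> exists j, exists j', minor a m j j' != 0.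
Proof.
move=> ma.
case: (pickP (fun jj : 'I_l * 'I_l => minor a m jj.1 jj.2 != 0)) => [[j j'] H|H].
  by exists j, j'.
exfalso.
have [j0 cj0] := a_coef_nz (Hlin a) (Hnz a).
have Hm : forall j, co m j * co a j0 = co m j0 * co a j.
  by move=> j; move: (H (j, j0)) => /= /negbFE; rewrite /minor subr_eq0 => /eqP.
have E : co a j0 *: alpha m = co m j0 *: alpha a.
  rewrite !alpha_eq !scaler_sumr; apply: eq_bigr => j _; rewrite !scalerA.
  by rewrite mulrC Hm.
have cm0 : co m j0 != 0.
  apply/eqP => c0; move: E; rewrite c0 scale0r => /eqP; rewrite mscalerI (negPf cj0) /=.
  by rewrite (negPf (Hnz m)).
exact: (Hhyp ma (hyp_scale2 cj0 cm0 E)).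
Qed.

Lemma cong_bound a m : m != a -> exists B, forall e, cong e a m -> (e < B)%N.
Proof.
move=> ma; have [j [j' Mnz]] := minor_nz ma.
exists `|minor a m j j'|%N => e [d Hd].
have Hdiv : ((p%:Z) ^+ e %| minor a m j j')%Z.
  have -> : minor a m j j' = (co m j - d * co a j) * co a j' - (co m j' - d * co a j') * co a j.
    by rewrite /minor; ring.
  by rewrite rpredB // dvdz_mulr.
have : (p ^ e %| `|minor a m j j'|)%N.
  by move: Hdiv; rewrite dvdzE abszX.
move/dvdn_leq; rewrite absz_gt0 Mnz => /(_ isT) H.
apply: leq_trans H; apply: ltn_expl; exact: prime_gt1.
Qed.

Lemma tors_pow e : forall w, ~ N w -> N (fun i => (p%:R)^+e * w i) -> zero_divisor_coker p alpha.
Proof.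
elim: e => [|e IH] w nw.
  suff -> : (fun i => (p%:R)^+0 * w i) = w by [].
  by apply: functional_extensionality => i; rewrite expr0 mul1r.
move=> Hw.
case: (classic (N (fun i => p%:R * w i))) => [H|H]; first by exists w.
apply: (IH _ H).
suff -> : (fun i => (p%:R)^+e * (p%:R * w i)) = (fun i => (p%:R)^+e.+1 * w i) by [].
by apply: functional_extensionality => i; rewrite exprSr mulrA.
Qed.


Definition asb (P : Prop) : bool := if excluded_middle_informative P then true else false.
Lemma asbP (P : Prop) : reflect P (asb P).
Proof. by rewrite /asb; case: excluded_middle_informative => H; constructor. Qed.

Lemma sum_delta (R : nzRingType) (F : 'I_l -> R) j : \sum_i F i * (i == j)%:R = F j.
Proof.
rewrite (bigD1 j) //= eqxx mulr1 big1 ?addr0 // => i /negPf ->; by rewrite mulr0.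
Qed.

Lemma cong_red m a (d : int) e : (0 < e)%N ->
  (forall j, ((p%:Z) ^+ e %| co m j - d * co a j)%Z) ->
  forall j, ((co m j)%:~R : 'F_p) = d%:~R * (co a j)%:~R.
Proof.
move=> e0 H j; apply/eqP; rewrite -subr_eq0 -rmorphM -rmorphB Fp_intr_eq0 //.
apply: dvdz_trans (H j); rewrite -[X in (X %| _)%Z]expr1; exact: dvdz_exp2l.
Qed.

Lemma aux_ring (T : comRingType) (x y z u : T) : x * (u * z) + u * - (y * z) = z * (u * (x - y)).
Proof. ring. Qed.

Definition Hyp a e := forall m, m != a -> cong 1 a m -> cong e a m.

Lemma weak_main a e k : (0 < e)%N -> Hyp a e -> k != a -> cong e a k -> ~ cong e.+1 a k ->
  zero_divisor_coker p alpha.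
Proof.
move=> e0 He ka [d Hd] nc.
pose P := (p%:Z) ^+ e.
have Pnz : P != 0 by rewrite expf_neq0 // -lt0n prime_gt0.
pose be j := ((co k j - d * co a j) %/ P)%Z.
have Hbe : forall j, co k j - d * co a j = be j * P by move=> j; rewrite divzK.
have [j [j' Hjj]] : exists j, exists j', ~~ (p%:Z %| co a j' * be j - co a j * be j')%Z.
  case: (pickP (fun jj : 'I_l * 'I_l => ~~ (p%:Z %| co a jj.2 * be jj.1 - co a jj.1 * be jj.2)%Z)) => [[j1 j2] H|H].
    by exists j1, j2.
  exfalso; apply: nc.
  have [j0 Hj0] := ra_coef_nz a.
  have Hall : forall j1 j2, ((co a j2)%:~R : 'F_p) * (be j1)%:~R = (co a j1)%:~R * (be j2)%:~R.
    move=> j1 j2; move: (H (j1, j2)) => /= /negbFE.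
    by rewrite -(Fp_intr_eq0 pp) rmorphB !rmorphM subr_eq0 => /eqP.
  pose t : 'F_p := (be j0)%:~R / (co a j0)%:~R.
  exists (d + P * (val t)%:Z) => j1.
  have -> : co k j1 - (d + P * (val t)%:Z) * co a j1 = P * (be j1 - (val t)%:Z * co a j1).
    have Ek : co k j1 = be j1 * P + d * co a j1 by rewrite -Hbe subrK.
    by rewrite Ek; ring.
  rewrite exprSr -/P dvdz_mul ?dvdzz //.
  have tR : (((val t)%:Z)%:~R : 'F_p) = t by rewrite -pmulrn Fp_val_natr.
  rewrite -(Fp_intr_eq0 pp) intrB intrM tR /t subr_eq0; apply/eqP.
  apply: (mulfI Hj0); rewrite Hall.
  have -> : ((co a j0)%:~R : 'F_p) * ((be j0)%:~R / (co a j0)%:~R * (co a j1)%:~R)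
     = (be j0)%:~R * (co a j1)%:~R by field.
  by rewrite mulrC.
pose L m := co m j * co a j' - co m j' * co a j.
pose b := co a j' * be j - co a j * be j'.
have La : L a = 0 by rewrite /L mulrC subrr.
have Lk : L k = b * P.
  rewrite /L /b.
  have -> : co k j = be j * P + d * co a j by rewrite -Hbe subrK.
  have -> : co k j' = be j' * P + d * co a j' by rewrite -Hbe subrK.
  ring.
pose Gb m := asb (cong e a m).
have Ga : Gb a by apply/asbP; exists 1 => j''; rewrite mul1r subrr dvdz0.
have Gk : Gb k by apply/asbP; exists d.
have LG : forall m, Gb m -> (P %| L m)%Z.
  move=> m /asbP [dm Hdm]; rewrite /L.
  have -> : co m j * co a j' - co m j' * co a j =
     (co m j - dm * co a j) * co a j' - (co m j' - dm * co a j') * co a j by ring.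
  by rewrite rpredB // dvdz_mulr.
pose R := \prod_(m < n | ~~ Gb m) alpha m.
pose w := fun m => if Gb m then R * ((L m %/ P)%Z)%:MP else 0.
apply: (@tors_pow e w).
  move=> [c' [g' Hw]].
  pose S m := \sum_jj (alpha m)^`M(jj) * g' jj.
  have redS : forall m, red (S m) = \sum_jj ((co m jj)%:~R)%:MP * red (g' jj).
    by move=> m; rewrite red_sum; apply: eq_bigr => jj _; rewrite redM deriv_alpha redC.
  have wa : w a = 0 by rewrite /w Ga La div0z mpolyC0 mulr0.
  have wk : w k = R * b%:MP by rewrite /w Gk Lk mulzK.
  have Ha := Hw a; have Hk := Hw k.
  rewrite wa -/(S a) in Ha; rewrite wk -/(S k) in Hk.
  have Ha' : red (S a) = - (red (c' a) * ra a).
    move: (congr1 red Ha); rewrite red0 redD redM -/(ra a) => /esym /eqP.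
    by rewrite addrC addr_eq0 => /eqP.
  have dk := cong_red e0 Hd.
  have Sk : red (S k) = (d%:~R)%:MP * red (S a).
    by rewrite !redS mulr_sumr; apply: eq_bigr => jj _; rewrite dk mpolyCM mulrA.
  have rak : ra k = (d%:~R)%:MP * ra a.
    by rewrite !ra_eq mulr_sumr; apply: eq_bigr => jj _; rewrite dk mul_mpolyC scalerA.
  have Hdv : mdvd (ra a) (red (R * b%:MP)).
    exists ((d%:~R)%:MP * (red (c' k) - red (c' a))).
    have Hk' := congr1 red Hk.
    rewrite [in RHS]redD [in RHS]redM -/(ra k) Sk Ha' rak in Hk'.
    rewrite Hk'; exact: aux_ring.
  have HdR : mdvd (ra a) (red R).
    move: Hdv; rewrite redM => /ra_prime [//|[h Hh]].
    exfalso; have := congr1 (mcoeff 0%MM) Hh.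
    rewrite (mcoeff0_is_multiplicative _ _).1 ra_eq lin_coef0 mul0r red_coef mcoeffC eqxx mulr1.
    by move/eqP; rewrite Fp_intr_eq0 // (negPf Hjj).
  move: HdR; rewrite /R red_prod => /(prime_prod (@ra_prime a) (@ra_not_unit a)) [m [Gm Hm]].
  have cm := ra_dvd_cong Hm.
  have ma : m != a by apply: contraNneq Gm => ->.
  by case/negP: Gm; apply/asbP; apply: He.
pose ga := fun jj : 'I_l => (jj == j)%:R * co a j' - (jj == j')%:R * co a j.
have HL : forall m, \sum_jj co m jj * ga jj = L m.
  move=> m; rewrite /ga; under eq_bigr => jj _ do rewrite mulrBr !mulrA.
  by rewrite sumrB -!mulr_suml !sum_delta.
exists (fun m => if Gb m then 0 else - (\prod_(m' < n | ~~ Gb m' && (m' != m)) alpha m') * (L m)%:MP).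
exists (fun jj => R * (ga jj)%:MP) => m.
have HS : \sum_jj (alpha m)^`M(jj) * (R * (ga jj)%:MP) = R * (L m)%:MP.
  under eq_bigr => jj _ do rewrite deriv_alpha mulrCA -mpolyCM.
  by rewrite -mulr_sumr -HL -rmorph_sum.
rewrite HS pnat_C -rmorphXn /= -/P /w.
case: ifP => Gm.
  have -> : (L m)%:MP = ((L m %/ P)%Z)%:MP * P%:MP :> {mpoly int[l]}.
    by rewrite -mpolyCM divzK // LG.
  ring.
rewrite mulr0 /R [\prod_(m0 < n | ~~ Gb m0) _](bigD1 m) /=; last exact: negbT Gm.
ring.
Qed.


Lemma Hyp_or a e : (0 < e)%N -> Hyp a e \/ zero_divisor_coker p alpha.
Proof.
elim: e => [//|e IH] _.
have [e0|e0] := posnP e.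
  by left; rewrite e0 => m _ h.
case: (IH e0) => [He|]; last by right.
case: (classic (exists m, m != a /\ cong 1 a m /\ ~ cong e.+1 a m)) => [[m [ma [c1 nc]]]|H].
  by right; apply: (weak_main e0 He ma (He m ma c1) nc).
left => m ma c1; apply: NNPP => nc; apply: H; exists m; by split.
Qed.

Lemma weak_case a k : a != k -> cong 1 a k -> zero_divisor_coker p alpha.
Proof.
move=> ak c1.
have ka : k != a by rewrite eq_sym.
have [B HB] := cong_bound ka.
case: (@Hyp_or a B.+1 isT) => [H|//].
by have := HB _ (H k ka c1); rewrite ltnNge leqnSn.
Qed.

Lemma main_iff : zero_divisor_quotJ p alpha <-> zero_divisor_coker p alpha.
Proof.
split; last exact: dir1.
case: (classic (exists a, exists k, a != k /\ cong 1 a k)) => [[a [k [ak c]]] _|H].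
  exact: (weak_case ak c).
apply: dir2_strong => a m am c; apply: H; exists a, m; by split.
Qed.

End Main.

Unset Implicit Arguments.
Theorem proposition4p9 (l n : nat) (alpha : 'I_n -> {mpoly int[l]}) (p : nat) :
  (forall i, linear_form (alpha i)) ->
  (forall i, alpha i != 0) ->
  (forall i j, i != j -> hyperplane (alpha i) <> hyperplane (alpha j)) ->
  (forall (q : nat) i, prime q -> ~ divides_in_SZ q%:Z (alpha i)) ->
  prime p ->
  good_prime p alpha ->
  (zero_divisor_quotJ p alpha <-> zero_divisor_coker p alpha).
Proof.
move=> H1 H2 H3 H4 H5 _.
exact: (main_iff H1 H2 H3 H4 H5).
Qed.
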